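(* For every positive integer $n$, let $\Lambda_n$ be the set of sequences $w=w_0w_1\cdots w_n\in\{0,1\}^{n+1}$ with $w_0=0$ and $w_n=1$. There exists a bijection $\lambda\mapsto w(\lambda)=w_0w_1\cdots w_n$ from $\mathcal{H}_n$ to $\Lambda_n$ such that for every $\lambda\in\mathcal{H}_n$: $$\ell(\lambda)=|\{1\le i\le n: w_i=1\}|,\qquad \mathrm{rep}(\lambda)=|\{1\le i\le n: w_i=w_{i-1}=1\}|,$$ $$\mathrm{even}(\lambda)=|\{1\le i\le n: w_i=1 \text{ and } |\{0\le j<i: w_j=0\}| \text{ is even}\}|.$$
   Context: A partition is a finite nonempty weakly decreasing sequence $\lambda=(\lambda_1,\ldots,\lambda_k)$ of positive integers; $\ell(\lambda)=k$. The perimeter is $\Gamma(\lambda)=\lambda_1+\ell(\lambda)-1$; $\mathcal{H}_n$ is the set of partitions with perimeter $n$. $\mathrm{rep}(\lambda)=|\{1\le i\le \ell(\lambda)-1:\lambda_i=\lambda_{i+1}\}|$ and $\mathrm{even}(\lambda)=|\{1\le i\le\ell(\lambda):\lambda_i\text{ even}\}|$. *)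

(* Defs.v *)
From mathcomp Require Import all_boot.
Set Implicit Arguments. Unset Strict Implicit. Unset Printing Implicit Defensive.

(* A partition: finite nonempty weakly decreasing sequence of positive integers,
   stored as lambda_1 :: lambda_2 :: ... :: lambda_k (0-indexed in the seq). *)
Definition is_partition (l : seq nat) : bool :=
  [&& l != [::], all (fun x => 0 < x) l & sorted geq l].

Definition ell (l : seq nat) : nat := size l.

Definition perimeter (l : seq nat) : nat := head 0 l + size l - 1.

Definition inH (n : nat) (l : seq nat) : bool := is_partition l && (perimeter l == n).

(* rep(lambda) = #{1 <= i <= ell-1 : lambda_i = lambda_{i+1}} (0-indexed: i and i+1) *)
Definition rep (l : seq nat) : nat :=
  \sum_(0 <= i < (size l).-1) (nth 0 l i == nth 0 l i.+1).

Definition even_parts (l : seq nat) : nat := count (fun x => ~~ odd x) l.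

(* Lambda_n : words w_0 ... w_n in {0,1}^{n+1} with w_0 = 0, w_n = 1
   (bits encoded as booleans, 1 = true). *)
Definition inLambda (n : nat) (w : seq bool) : bool :=
  [&& size w == n.+1, nth true w 0 == false & nth false w n].

Definition w_ones (n : nat) (w : seq bool) : nat :=
  \sum_(1 <= i < n.+1) nth false w i.

Definition w_double_ones (n : nat) (w : seq bool) : nat :=
  \sum_(1 <= i < n.+1) (nth false w i && nth false w i.-1).

Definition w_even_ones (n : nat) (w : seq bool) : nat :=
  \sum_(1 <= i < n.+1) (nth false w i && ~~ odd (count negb (take i w))).

(* Main.v *)
Require Import Defs.
From mathcomp Require Import all_boot.
From mathcomp Require Import zify.

Definition good (l : seq nat) : bool := all (fun x => 0 < x) l && sorted geq l.

Fixpoint F (l : seq nat) : seq bool :=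
  match l with
  | [::] => [:: false]
  | x :: l' => F l' ++ rcons (nseq (x - head 1 l') false) true
  end.

Fixpoint dec (c : nat) (acc : seq nat) (w : seq bool) : seq nat :=
  match w with
  | [::] => acc
  | b :: w' => if b then dec c (c :: acc) w' else dec c.+1 acc w'
  end.

Lemma good_cons x l : good (x :: l) = (head 1 l <= x) && good l.
Proof.
case: l => [|y l] //=; rewrite /good /=.
  by rewrite andbT.
case: x => [|x]; case: y => [|y] //=; rewrite ?andbF //.
by case: (all _ _); case: (y < x.+1).
Qed.

Lemma head_F l : head true (F l) = false.
Proof. elim: l => //= x l IH. by case: (F l) IH. Qed.

Lemma F_nil l : 0 < size (F l).
Proof. elim: l => //= x l IH; rewrite size_cat; lia. Qed.

Lemma size_F l : good l -> size (F l) = head 1 l + size l.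
Proof.
elim: l => //= x l IH; rewrite good_cons => /andP [hx gl].
rewrite size_cat size_rcons size_nseq IH //; lia.
Qed.

Lemma count_F l : good l -> count negb (F l) = head 1 l.
Proof.
elim: l => //= x l IH; rewrite good_cons => /andP [hx gl].
rewrite count_cat -cats1 count_cat count_nseq IH //=; lia.
Qed.

Lemma last_F l : l != [::] -> last false (F l) = true.
Proof. case: l => //= x l _; by rewrite last_cat last_rcons. Qed.

Lemma dec_cat c acc W u : dec c acc (W ++ u) = dec (c + count negb W) (dec c acc W) u.
Proof.
elim: W c acc => [|b W IH] c acc /=; first by rewrite addn0.
by case: b; rewrite IH //= addSnnS.
Qed.

Lemma dec_seg c acc k : dec c acc (rcons (nseq k false) true) = (c + k) :: acc.
Proof.
elim: k c => [|k IH] c /=; first by rewrite addn0.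
by rewrite IH addSnnS.
Qed.

Lemma dec_F l : good l -> dec 0 [::] (F l) = l.
Proof.
elim: l => //= x l IH; rewrite good_cons => /andP [hx gl].
rewrite dec_cat IH // dec_seg count_F //; congr (_ :: _); lia.
Qed.

Definition S (P : seq bool -> nat -> bool) (w : seq bool) : nat :=
  \sum_(1 <= i < size w) (nth false w i && P w i).

Lemma stat_step P W k : 0 < size W ->
  (forall u i, i < size W -> P (W ++ u) i = P W i) ->
  S P (W ++ rcons (nseq k false) true) =
  S P W + P (W ++ rcons (nseq k false) true) (size W + k).
Proof.
move=> hW hP; rewrite /S size_cat.
rewrite (big_cat_nat _ (n := size W)) //=; last by rewrite leq_addr.
congr (_ + _).
  apply: eq_big_nat => i /andP [_ hi].
  by rewrite hP // nth_cat hi.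
rewrite -{1}[size W]add0n big_addn addKn size_rcons size_nseq big_nat_recr //=.
rewrite big1_seq ?add0n; last first.
  move=> j; rewrite mem_index_iota => /andP [_ hj].
  move: hj => /andP [_ hj].
  by rewrite nth_cat ltnNge leq_addl /= addnK nth_rcons size_nseq hj nth_nseq hj.
by rewrite nth_cat ltnNge leq_addl /= addnK nth_rcons size_nseq ltnn eqxx addnC.
Qed.

Definition P1 (w : seq bool) (i : nat) := true.
Definition P2 (w : seq bool) (i : nat) := nth false w i.-1.
Definition P3 (w : seq bool) (i : nat) := ~~ odd (count negb (take i w)).

Lemma rep_cons x l : rep (x :: l) = (if l is y :: _ then x == y else false) + rep l.
Proof.
case: l => [|y l]; first by rewrite /rep /= !big_geq.
rewrite /rep /= big_nat_recl //=.
Qed.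

Lemma stats l : good l ->
  [/\ S P1 (F l) = size l, S P2 (F l) = rep l & S P3 (F l) = even_parts l].
Proof.
elim: l => [|x l IH]; first by split; rewrite /S /rep /= ?big_geq.
rewrite good_cons => /andP [hx gl]; case: (IH gl) => h1 h2 h3.
have hW := F_nil l.
split.
- rewrite /= stat_step // h1 /P1 addn1 //.
- rewrite /= stat_step //; last first.
    move=> u i hi; rewrite /P2 nth_cat.
    by rewrite (leq_ltn_trans (leq_pred i) hi).
  rewrite h2 rep_cons addnC /P2; congr (_ + _).
  case E: (x - head 1 l) => [|k].
    rewrite addn0 nth_cat.
    have -> : (size (F l)).-1 < size (F l) by lia.
    rewrite nth_last.
    case: l {IH h1 h2 h3} hx gl hW E => [|y l] /= hx gl hW E; first by [].
    rewrite last_cat last_rcons; apply/esym/eqP; lia.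
  rewrite addnS -pred_Sn nth_cat ltnNge leq_addr /= addKn -rcons_cons.
  rewrite (nth_rcons _ (nseq k.+1 false)) size_nseq ltnSn nth_nseq ltnSn.
  by case: l {IH h1 h2 h3} hx gl hW E => [|y l] //= hx gl hW E; apply/esym/eqP; lia.
- rewrite /= stat_step //; last first.
    move=> u i hi; rewrite /P3 take_cat hi //.
  rewrite h3 /P3 addnC take_cat ltnNge leq_addr /= addKn count_cat.
  rewrite -cats1 take_cat size_nseq ltnn subnn take0 cats0 count_nseq count_F //=.
  by rewrite mul1n subnKC.
Qed.

Lemma rcons_nseq k (b : bool) : rcons (nseq k b) b = nseq k.+1 b.
Proof. by elim: k => //= k ->. Qed.

Lemma decomp v : head true v = false ->
  exists W k, [/\ v = W ++ nseq k false, W = [:: false] \/ last false W = true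
              & head true W = false].
Proof.
elim/last_ind: v => [|v b IH] //.
case: b => hv.
  by exists (rcons v true), 0; rewrite cats0 last_rcons; split; auto.
case: v IH hv => [|y v] IH hv.
  by exists [:: false], 0; split; auto.
move: hv => /= hy.
case: (IH hy) => W [k [e1 e2 e3]].
exists W, k.+1; split => //.
by rewrite -rcons_nseq -rcons_cat -e1.
Qed.

Lemma surj_gen m w : size w < m -> head true w = false ->
  (w = [:: false] \/ last false w = true) -> exists2 l, good l & F l = w.
Proof.
elim: m w => [|m IH] w //; rewrite ltnS => hs hh [->|hl].
  by exists [::].
case/lastP: w hs hh hl => [|v b] // hs hh hl.
rewrite last_rcons in hl; subst b.
case: v hs hh => [|y v] // hs hh.
have [W [k [e1 e2 e3]]] : exists W k, [/\ y :: v = W ++ nseq k false,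
   W = [:: false] \/ last false W = true & head true W = false] by apply: decomp.
have hsW : size W < m.
  move: hs; rewrite size_rcons e1 size_cat; lia.
case: (IH W hsW e3 e2) => l' gl' hF.
exists ((head 1 l' + k) :: l').
  by rewrite good_cons leq_addr gl'.
by rewrite /= hF addKn -rcons_cat -e1.
Qed.

Theorem lemma2p8 (n : nat) (hn : 0 < n) :
  exists f : seq nat -> seq bool,
    [/\ (forall l, inH n l -> inLambda n (f l)),
        {in inH n &, injective f},
        (forall w, inLambda n w -> exists2 l, inH n l & f l = w)
      & (forall l, inH n l ->
          [/\ ell l = w_ones n (f l),
              rep l = w_double_ones n (f l)
            & even_parts l = w_even_ones n (f l)])].
Proof.
have key : forall l, inH n l -> [/\ good l, l != [::] & size (F l) = n.+1].
  move=> l /andP [/and3P [ne al so] /eqP hp].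
  have gl : good l by rewrite /good al so.
  split => //; rewrite size_F //.
  case: l ne al hp {so gl} => [|x l] //= _ /andP [hx _]; rewrite /perimeter /=; lia.
exists F; split.
- move=> l /key [gl ne hs]; rewrite /inLambda hs eqxx /=.
  rewrite [nth true _ 0](_ : _ = head true (F l)); last by case: (F l).
  rewrite head_F /=.
  by rewrite -[n]/(n.+1.-1) -hs nth_last last_F.
- move=> l1 l2 /key [g1 _ _] /key [g2 _ _] e.
  by rewrite -(@dec_F _ g1) -(@dec_F _ g2) e.
- move=> w /and3P [/eqP hs /eqP h0 hn'].
  have hl : last false w = true.
    by rewrite -nth_last hs.
  have hh : head true w = false by case: w hs h0 {hl hn'}.
  case: (@surj_gen _ _ (ltnSn (size w)) hh (or_intror hl)) => l gl hF.
  exists l => //.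
  have ne : l != [::] by case: l gl hF => // _ e; move: hs; rewrite -e /=; lia.
  rewrite /inH /is_partition ne.
  move: gl; rewrite /good => /andP [al so]; rewrite al so /=.
  have := size_F l (introT andP (conj al so)); rewrite hF hs.
  case: l ne al {so hF} => [|x l] //= _ /andP [hx _]; rewrite /perimeter /=; lia.
- move=> l /key [gl ne hs]; case: (stats l gl) => h1 h2 h3.
  split; [rewrite /ell -h1 | rewrite -h2 | rewrite -h3]; rewrite /S hs //.
  by apply: eq_bigr => i _; rewrite /P1 andbT.
Qed.
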